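(* Let $G$ be a graph, $t\in\mathbb{N}$, and let $H$ be a connected subgraph of $G$ such that $\mathrm{tw}\big(G[N_G[H]]\cup\binom{N_G(H)}{2}\big)\le 2$. Let $G'$ be the graph obtained from $G$ by deleting $V(H)$ and adding an edge between every pair of distinct vertices of $N_G(H)$. Then $(G,t)$ has a solution if and only if $(G',t)$ has a solution.
   Context: For a graph $G$ and $t\in\mathbb{N}$, a solution for $(G,t)$ is a set $S\subseteq V(G)$ with $|S|\le t$ and $\mathrm{tw}(G-S)\le 2$ ($\mathrm{tw}$ = treewidth). $N_G(H)$ is the set of vertices outside $V(H)$ adjacent to $V(H)$, $N_G[H]=V(H)\cup N_G(H)$. For a graph $F$ and a set $E'$ of vertex pairs, $F\cup E'$ denotes $F$ with the pairs of $E'$ whose both endpoints lie in $V(F)$ added as edges. *)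

(* Defs.v *)
From mathcomp Require Import all_boot.
Set Implicit Arguments. Unset Strict Implicit. Unset Printing Implicit Defensive.

(* A (simple, finite) graph is represented by a vertex set [A : {set V}]
   inside an ambient finite type [V], together with an adjacency relation
   [E : rel V]; only edges with both endpoints in [A] count. *)

(* A tree on the node type 'I_n.+1: symmetric, irreflexive, connected,
   with exactly (number of nodes - 1) edges (each counted twice as an
   ordered pair). *)
Definition is_tree (n : nat) (T : rel 'I_n.+1) : Prop :=
  [/\ symmetric T, irreflexive T,
      (forall x y : 'I_n.+1, connect T x y)
    & #|[set p : 'I_n.+1 * 'I_n.+1 | T p.1 p.2]| = 2 * n].

Definition tree_decomposition_width_le (V : finType) (A : {set V}) (E : rel V)
    (k : nat) (n : nat) (T : rel 'I_n.+1) (B : 'I_n.+1 -> {set V}) : Prop :=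
  is_tree T /\
  [/\ (forall i, B i \subset A),
      (forall v, v \in A -> exists i, v \in B i),
      (forall u v, u \in A -> v \in A -> E u v -> exists i, (u \in B i) && (v \in B i)),
      (forall v (i j : 'I_n.+1), v \in B i -> v \in B j ->
          connect [rel a b | [&& T a b, v \in B a & v \in B b]] i j)
    & (forall i, #|B i| <= k.+1)].

Definition tw_le (V : finType) (A : {set V}) (E : rel V) (k : nat) : Prop :=
  exists n (T : rel 'I_n.+1) (B : 'I_n.+1 -> {set V}),
    tree_decomposition_width_le A E k T B.

Definition solution (V : finType) (A : {set V}) (E : rel V) (t : nat) : Prop :=
  exists S : {set V}, [/\ S \subset A, #|S| <= t & tw_le (A :\: S) E 2].

Definition nbh (V : finType) (A : {set V}) (E : rel V) (X : {set V}) : {set V} :=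
  [set v in A | (v \notin X) && [exists u in X, E u v]].

Definition add_clique (V : finType) (E : rel V) (N : {set V}) : rel V :=
  [rel x y | E x y || [&& x != y, x \in N & y \in N]].

Definition connected_subgraph (V : finType) (A : {set V}) (E : rel V)
    (X : {set V}) (F : rel V) : Prop :=
  [/\ X \subset A, X != set0,
      (forall u v, u \in X -> v \in X -> F u v -> E u v),
      symmetric F
    & forall u v, u \in X -> v \in X ->
        connect [rel a b | [&& F a b, a \in X & b \in X]] u v].

(* Main.v *)
Require Import Defs.
From mathcomp Require Import all_boot zify.
Set Implicit Arguments. Unset Strict Implicit. Unset Printing Implicit Defensive.

Lemma connect_homo (T1 T2 : finType) (e1 : rel T1) (e2 : rel T2) (f : T1 -> T2) :
  (forall x y, e1 x y -> e2 (f x) (f y)) ->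
  forall x y, connect e1 x y -> connect e2 (f x) (f y).
Proof.
move=> H x y /connectP[p pp ->]; elim: p x pp => [|z p IH] x /=.
  by rewrite connect0.
case/andP=> exz pz; exact: connect_trans (connect1 (H _ _ exz)) (IH _ pz).
Qed.

Lemma connect_first (T : finType) (e : rel T) x y :
  connect e x y -> x != y -> exists m, e x m.
Proof.
move=> /connectP[[|m p] /= pp ->]; first by rewrite eqxx.
by case/andP: pp => exm _ _; exists m.
Qed.

Lemma sum_pred_card (I : finType) (P : pred I) : \sum_i (P i : nat) = #|P|.
Proof.
rewrite -sum1_card [in RHS]big_mkcond /=; apply: eq_bigr => i _; rewrite unfold_in; by case: (P i).
Qed.

Lemma card_pairs (I : finType) (R : rel I) :
  #|[set p : I * I | R p.1 p.2]| = \sum_x \sum_y (R x y : nat).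
Proof.
rewrite pair_bigA /= -sum_pred_card; apply: eq_bigr => p _.
by rewrite -[LHS]/(nat_of_bool (p \in [set p0 | R p0.1 p0.2])) inE.
Qed.

Lemma tree_leaf n (T : rel 'I_n.+2) :
  is_tree T -> exists l p, T l p /\ forall w, T l w -> w = p.
Proof.
case=> sT iT cT cnt.
have [/existsP [l /existsP [p /andP [Tlp /forallP H]]] | none] :=
  boolP [exists l, exists p, T l p && [forall w, T l w ==> (w == p)]].
  by exists l, p; split=> // w Tw; exact/eqP/(implyP (H w)).
exfalso.
have deg2 x : 1 < #|T x|.
  have [y neq] : exists y, y != x.
    case: (x =P ord0) => [->|/eqP ne]; last by exists ord0; rewrite eq_sym.
    by exists ord_max; rewrite -val_eqE.
  have [m Txm] : exists m, T x m by apply: connect_first (cT x y) _; rewrite eq_sym.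
  apply/negPn/negP => le1; apply/negP: none; rewrite negbK.
  apply/existsP; exists x; apply/existsP; exists m; rewrite Txm /=.
  apply/forallP => w; apply/implyP => Txw; apply/negPn/negP => wm.
  by apply/negP: le1; rewrite negbK; apply/card_gt1P; exists w, m.
move: cnt; rewrite card_pairs.
have : \sum_(x < n.+2) 2 <= \sum_x \sum_y (T x y : nat).
  by apply: leq_sum => x _; rewrite sum_pred_card.
rewrite sum_nat_const card_ord; lia.
Qed.
Lemma conn_avoid n (e : rel 'I_n.+2) l p x' y' :
  (forall w, e l w -> w = p) -> (forall w, e w l -> w = p) ->
  connect e (lift l x') (lift l y') ->
  connect [rel a b | e (lift l a) (lift l b)] x' y'.
Proof.
move=> Hl Hr /connectP[s ps Hlast].
case: (shortenP ps) Hlast => s' ps' us' _ Hlast.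
have ln : l \notin s'.
  apply/negP => ls; move: ps' us' Hlast; case/splitPr: ls => s1 s2.
  rewrite cat_path /= => /and3P [_ el pl].
  have ep := Hr _ el.
  rewrite last_cat /=; case: s2 pl => [|w s3] /=.
    by move=> _ _ /eqP; rewrite eq_sym (negbTE (neq_lift _ _)).
  case/andP=> /Hl ew _; rewrite ew => + _.
  move=> U; move: (U : uniq ((lift l x' :: s1) ++ [:: l, p & s3])).
  rewrite cat_uniq => /and3P[_ /hasPn H _].
  have := H p; rewrite !inE eqxx orbT => /(_ isT).
  by rewrite -in_cons -ep mem_last.
clear ps s; elim: s' x' ps' {us'} ln Hlast => [|z s IH] x' /=.
  by move=> _ _ /lift_inj ->; exact: connect0.
case/andP => ez ps; rewrite inE negb_or => /andP[zl ls] H.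
case: (unliftP l z) zl ez ps H => [z' ->|->]; last by rewrite eqxx.
move=> _ ez ps H.
apply: connect_trans (connect1 _) (IH z' ps ls H); exact: ez.
Qed.

Lemma tree_remove_leaf n (T : rel 'I_n.+2) l p :
  is_tree T -> T l p -> (forall w, T l w -> w = p) ->
  is_tree [rel a b | T (lift l a) (lift l b)].
Proof.
case=> sT iT cT cnt Tlp Hl.
have Hr w : T w l -> w = p by rewrite sT; apply: Hl.
split.
- by move=> a b /=; exact: sT.
- by move=> a /=; exact: iT.
- by move=> a b; exact: conn_avoid Hl Hr (cT _ _).
rewrite card_pairs /=; move: cnt; rewrite card_pairs.
have -> : \sum_(x < n.+2) \sum_(y < n.+2) (T x y : nat) =
    \sum_(y < n.+2) (T l y : nat) + (\sum_(x < n.+1) (T (lift l x) l : nat) +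
    \sum_(x < n.+1) \sum_(y < n.+1) (T (lift l x) (lift l y) : nat)).
  rewrite (bigD1_ord l) //=; congr (_ + _); rewrite -big_split /=.
  by apply: eq_bigr => x _; rewrite (bigD1_ord l).
have degl : \sum_(y < n.+2) (T l y : nat) = 1.
  rewrite sum_pred_card -(card1 p); apply: eq_card => y.
  rewrite unfold_in /=; apply/idP/eqP => [/Hl //|->]; exact: Tlp.
have degl' : \sum_(x < n.+1) (T (lift l x) l : nat) = 1.
  move: degl; rewrite (bigD1_ord l) //= iT /=.
  by under eq_bigr => x _ do rewrite sT.
rewrite degl degl' addnA mulnS => /eqP; rewrite eqn_add2l => /eqP h; exact: h.
Qed.

Lemma clique_bag (V : finType) n (T : rel 'I_n.+1) (B : 'I_n.+1 -> {set V})
    (Q : {set V}) :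
  is_tree T ->
  (forall v i j, v \in Q -> v \in B i -> v \in B j ->
     connect [rel a b | [&& T a b, v \in B a & v \in B b]] i j) ->
  (forall u v, u \in Q -> v \in Q -> exists i, (u \in B i) && (v \in B i)) ->
  exists i, Q \subset B i.
Proof.
elim: n T B => [|n IH] T B tT Hc Hp.
  exists ord0; apply/subsetP => v vQ.
  by have [i /andP[vi _]] := Hp v v vQ vQ; rewrite -(ord1 i).
have [l [p [Tlp Hl]]] := tree_leaf tT.
have [QBl|nQBl] := boolP (Q \subset B l); first by exists l.
have [w wQ wl] : exists2 w, w \in Q & w \notin B l.
  by move/subsetPn: nQBl => [w]; exists w.
have [sT iT cT cnt] := tT.
have Hr w' : T w' l -> w' = p by rewrite sT; apply: Hl.
have lp q : q \in Q -> q \in B l -> q \in B p.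
  move=> qQ qBl; apply/negPn/negP => qnp.
  have [j /andP[qj wj]] := Hp q w qQ wQ.
  have jl : l != j by apply: contraNneq wl => ->.
  have [m /= /and3P[Tlm _ qm]] := connect_first (Hc q l j qQ qBl qj) jl.
  by move: qm; rewrite (Hl m Tlm) (negbTE qnp).
have pl : p != l by apply: contraTneq Tlp => ->; rewrite iT.
case: (unliftP l p) pl => [p' ep|->]; last by rewrite eqxx.
move=> _.
have [i' Hi'] : exists i', Q \subset B (lift l i'); last by exists (lift l i').
apply: (IH [rel a b | T (lift l a) (lift l b)] (fun a => B (lift l a))
   (tree_remove_leaf tT Tlp Hl)).
- move=> v i j vQ vi vj.
  apply: (@conn_avoid n [rel a b | [&& T a b, v \in B a & v \in B b]] l p).
  + by move=> w' /= /and3P[/Hl].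
  + by move=> w' /= /and3P[/Hr].
  + exact: Hc.
- move=> u v uQ vQ; have [i /andP[ui vi]] := Hp u v uQ vQ.
  case: (unliftP l i) ui vi => [i' ->|->] ui vi.
    by exists i'; rewrite ui vi.
  by exists p'; rewrite -ep !lp.
Qed.
Lemma tw_map (V : finType) (A A' : {set V}) (E E' : rel V) k (f : V -> V) :
  tw_le A E k ->
  (forall v, v \in A' -> exists2 x, x \in A & f x = v) ->
  (forall u v, u \in A' -> v \in A' -> E' u v ->
     exists x y, [/\ x \in A, y \in A, f x = u, f y = v & E x y]) ->
  (forall x y, x \in A -> y \in A -> f x = f y -> f x \in A' ->
     connect [rel a b | [&& E a b, a \in A, b \in A, f a == f x & f b == f x]] x y) ->
  tw_le A' E' k.
Proof.
move=> [n [T [B [tT [BA Bcov Bedge Bconn Bsz]]]]] Hcov Hedge Hpre.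
exists n, T, (fun i => (f @: B i) :&: A'); split=> //; split.
- by move=> i; exact: subsetIr.
- move=> v vA'; have [x xA fxv] := Hcov v vA'; subst v.
  have [i xi] := Bcov x xA; exists i; by rewrite inE imset_f.
- move=> u v uA' vA' e; have [x [y [xA yA fxu fyv exy]]] := Hedge u v uA' vA' e.
  subst u v; have [i /andP[xi yi]] := Bedge x y xA yA exy.
  by exists i; rewrite !inE !imset_f // uA' vA'.
- move=> v i j; rewrite !inE => /andP[/imsetP[x xi ->] vA'] /andP[/imsetP[y yj fxy] _].
  have xA := subsetP (BA i) x xi; have yA := subsetP (BA j) y yj.
  set R := [rel a b | _].
  have lift_sub z : f z = f x -> forall a b,
      connect [rel a b | [&& T a b, z \in B a & z \in B b]] a b -> connect R a b.
    move=> fz; apply: connect_sub => a b /= /and3P[Tab za zb].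
    by apply: connect1; rewrite /= Tab !inE -fz !imset_f // fz vA'.
  pose P z := forall l, z \in B l -> connect R i l.
  have Px : P x by move=> l xl; apply: (lift_sub x erefl); exact: Bconn.
  have step z z' : P z ->
      [&& E z z', z \in A, z' \in A, f z == f x & f z' == f x] -> P z'.
    move=> Pz /and5P[ezz zA zA' _ /eqP fz'] l z'l.
    have [m /andP[zm z'm]] := Bedge z z' zA zA' ezz.
    apply: connect_trans (Pz m zm) _; apply: (lift_sub z' fz'); exact: Bconn.
  have Hp : forall s z, P z -> path [rel a b | [&& E a b, a \in A, b \in A, f a == f x & f b == f x]] z s -> P (last z s).
    by elim=> [|z' s IH] z //= Pz /andP[r ps]; apply: IH (step _ _ Pz r) ps.
  have /connectP[s ps yl] := Hpre x y xA yA fxy vA'.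
  by rewrite yl in yj; exact: Hp Px ps _ yj.
- move=> i; apply: leq_trans (Bsz i); apply: leq_trans (leq_imset_card f (B i)).
  exact: subset_leq_card (subsetIl _ _).
Qed.
Definition glueT n1 n2 (T1 : rel 'I_n1.+1) (T2 : rel 'I_n2.+1) i1 i2 :
    rel 'I_(n1.+1 + n2.+1) :=
  fun x y => match split x, split y with
  | inl a, inl b => T1 a b
  | inr a, inr b => T2 a b
  | inl a, inr b => (a == i1) && (b == i2)
  | inr a, inl b => (a == i2) && (b == i1) end.

Definition glueB (V : finType) n1 n2 (B1 : 'I_n1.+1 -> {set V})
    (B2 : 'I_n2.+1 -> {set V}) : 'I_(n1.+1 + n2.+1) -> {set V} :=
  fun x => match split x with inl a => B1 a | inr b => B2 b end.

Lemma splitL m n (a : 'I_m) : split (lshift n a) = inl a.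
Proof. exact: (unsplitK (inl a)). Qed.
Lemma splitR m n (a : 'I_n) : split (rshift m a) = inr a.
Proof. exact: (unsplitK (inr a)). Qed.

Lemma glue_tree n1 n2 (T1 : rel 'I_n1.+1) (T2 : rel 'I_n2.+1) i1 i2 :
  is_tree T1 -> is_tree T2 -> @is_tree (n1 + n2.+1) (glueT T1 T2 i1 i2).
Proof.
case=> sT1 iT1 cT1 cnt1 [sT2 iT2 cT2 cnt2].
have sG : symmetric (glueT T1 T2 i1 i2).
  move=> x y; rewrite /glueT; case: (split x) => a; case: (split y) => b //;
  by rewrite andbC.
have GL a b : glueT T1 T2 i1 i2 (lshift _ a) (lshift _ b) = T1 a b.
  by rewrite /glueT !splitL.
have GR a b : glueT T1 T2 i1 i2 (rshift _ a) (rshift _ b) = T2 a b.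
  by rewrite /glueT !splitR.
have GLR : glueT T1 T2 i1 i2 (lshift _ i1) (rshift _ i2).
  by rewrite /glueT splitL splitR !eqxx.
have toroot x : connect (glueT T1 T2 i1 i2) x (lshift _ i1).
  rewrite -[x]splitK; case: (split x) => a /=.
    by apply: (connect_homo (e1 := T1)) => // u v; rewrite GL.
  have h : connect (glueT T1 T2 i1 i2) (rshift n1.+1 a) (rshift n1.+1 i2).
    by apply: (connect_homo (e1 := T2)) => // u v; rewrite GR.
  by apply: connect_trans h _; apply: connect1; rewrite sG.
split.
- exact: sG.
- by move=> x; rewrite /glueT; case: (@split n1.+1 n2.+1 x).
- move=> x y; apply: connect_trans (toroot (x : 'I_(n1.+1 + n2.+1))) _.
  by rewrite (sym_connect_sym sG).
rewrite card_pairs (@big_split_ord _ _ _ n1.+1 n2.+1) /=.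
under eq_bigr => x _ do rewrite (@big_split_ord _ _ _ n1.+1 n2.+1) /=.
under [X in _ + X = _]eq_bigr => x _ do rewrite (@big_split_ord _ _ _ n1.+1 n2.+1) /=.
rewrite !big_split /=.
have E1 : \sum_(a < n1.+1) \sum_(b < n1.+1)
    (glueT T1 T2 i1 i2 (lshift n2.+1 a) (lshift n2.+1 b) : nat) = 2 * n1.
  by rewrite -cnt1 card_pairs; apply: eq_bigr => a _; apply: eq_bigr => b _; rewrite GL.
have E2 : \sum_(a < n2.+1) \sum_(b < n2.+1)
    (glueT T1 T2 i1 i2 (rshift n1.+1 a) (rshift n1.+1 b) : nat) = 2 * n2.
  by rewrite -cnt2 card_pairs; apply: eq_bigr => a _; apply: eq_bigr => b _; rewrite GR.
have E3 : \sum_(a < n1.+1) \sum_(b < n2.+1)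
    (glueT T1 T2 i1 i2 (lshift n2.+1 a) (rshift n1.+1 b) : nat) = 1.
  rewrite (eq_bigr (fun a => \sum_(b < n2.+1) ((a == i1) && (b == i2) : nat))); last first.
    by move=> a _; apply: eq_bigr => b _; rewrite /glueT splitL splitR.
  rewrite (bigD1 i1) //= [X in _ + X]big1 ?addn0; last first.
    by move=> a ai; rewrite big1 // => b _; rewrite (negbTE ai).
  rewrite (bigD1 i2) //= !eqxx [X in _ + X]big1 ?addn0 //.
  by move=> b bi; rewrite (negbTE bi).
have E4 : \sum_(a < n2.+1) \sum_(b < n1.+1)
    (glueT T1 T2 i1 i2 (rshift n1.+1 a) (lshift n2.+1 b) : nat) = 1.
  rewrite (eq_bigr (fun a => \sum_(b < n1.+1) ((a == i2) && (b == i1) : nat))); last first.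
    by move=> a _; apply: eq_bigr => b _; rewrite /glueT splitL splitR.
  rewrite (bigD1 i2) //= [X in _ + X]big1 ?addn0; last first.
    by move=> a ai; rewrite big1 // => b _; rewrite (negbTE ai).
  rewrite (bigD1 i1) //= !eqxx [X in _ + X]big1 ?addn0 //.
  by move=> b bi; rewrite (negbTE bi).
rewrite E1 E2 E3 E4; lia.
Qed.
Lemma tw_glue (V : finType) (A1 A2 : {set V}) (E1 E2 E : rel V) k n1 n2
    (T1 : rel 'I_n1.+1) (B1 : 'I_n1.+1 -> {set V})
    (T2 : rel 'I_n2.+1) (B2 : 'I_n2.+1 -> {set V}) i1 i2 :
  tree_decomposition_width_le A1 E1 k T1 B1 ->
  tree_decomposition_width_le A2 E2 k T2 B2 ->
  A1 :&: A2 \subset B1 i1 -> A1 :&: A2 \subset B2 i2 ->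
  (forall u v, u \in A1 :|: A2 -> v \in A1 :|: A2 -> E u v ->
     [&& u \in A1, v \in A1 & E1 u v] || [&& u \in A2, v \in A2 & E2 u v]) ->
  tw_le (A1 :|: A2) E k.
Proof.
move=> [tT1 [BA1 Bcov1 Bedge1 Bconn1 Bsz1]] [tT2 [BA2 Bcov2 Bedge2 Bconn2 Bsz2]]
  sub1 sub2 HE.
exists (n1 + n2.+1), (glueT T1 T2 i1 i2), (glueB B1 B2).
split; first exact: glue_tree.
have BL a : glueB B1 B2 (lshift n2.+1 a) = B1 a by rewrite /glueB splitL.
have BR a : glueB B1 B2 (rshift n1.+1 a) = B2 a by rewrite /glueB splitR.
have GL a b : glueT T1 T2 i1 i2 (lshift n2.+1 a) (lshift n2.+1 b) = T1 a b.
  by rewrite /glueT !splitL.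
have GR a b : glueT T1 T2 i1 i2 (rshift n1.+1 a) (rshift n1.+1 b) = T2 a b.
  by rewrite /glueT !splitR.
split.
- move=> x; rewrite /glueB; case: (@split n1.+1 n2.+1 x) => a.
    exact: subset_trans (BA1 a) (subsetUl _ _).
  exact: subset_trans (BA2 a) (subsetUr _ _).
- move=> v; rewrite inE => /orP[vA|vA].
    by have [i vi] := Bcov1 v vA; exists (lshift n2.+1 i); rewrite BL.
  by have [i vi] := Bcov2 v vA; exists (rshift n1.+1 i); rewrite BR.
- move=> u v uA vA euv; case/orP: (HE u v uA vA euv) => /and3P[uA' vA' e'].
    by have [i uvi] := Bedge1 u v uA' vA' e'; exists (lshift n2.+1 i); rewrite BL.
  by have [i uvi] := Bedge2 u v uA' vA' e'; exists (rshift n1.+1 i); rewrite BR.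
- move=> v x y.
  set R := [rel a b | _].
  have liftL a b : connect [rel a b | [&& T1 a b, v \in B1 a & v \in B1 b]] a b ->
      connect R (lshift n2.+1 a) (lshift n2.+1 b).
    by apply: connect_homo => u w /=; rewrite GL !BL.
  have liftR a b : connect [rel a b | [&& T2 a b, v \in B2 a & v \in B2 b]] a b ->
      connect R (rshift n1.+1 a) (rshift n1.+1 b).
    by apply: connect_homo => u w /=; rewrite GR !BR.
  have mid a b : v \in B1 a -> v \in B2 b -> v \in B1 i1 /\ v \in B2 i2.
    move=> va vb; have vI : v \in A1 :&: A2.
      by rewrite inE (subsetP (BA1 a) _ va) (subsetP (BA2 b) _ vb).
    by split; [apply: (subsetP sub1) | apply: (subsetP sub2)].
  move: x y; change (forall x y : 'I_(n1.+1 + n2.+1), v \in glueB B1 B2 x -> v \in glueB B1 B2 y -> connect R x y); move=> x y.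
  rewrite -[x]splitK -[y]splitK; case: (split x) => a; case: (split y) => b /=;
    rewrite ?BL ?BR => va vb.
  + exact/liftL/Bconn1.
  + have [v1 v2] := mid a b va vb.
    apply: connect_trans (liftL _ _ (Bconn1 v a i1 va v1)) _.
    apply: connect_trans (liftR _ _ (Bconn2 v i2 b v2 vb)).
    by apply: connect1; rewrite /= BL BR v1 v2 /glueT splitL splitR !eqxx.
  + have [v1 v2] := mid b a vb va.
    apply: connect_trans (liftR _ _ (Bconn2 v a i2 va v2)) _.
    apply: connect_trans (liftL _ _ (Bconn1 v i1 b v1 vb)).
    by apply: connect1; rewrite /= BL BR v1 v2 /glueT splitL splitR !eqxx.
  + exact/liftR/Bconn2.
- by move=> x; rewrite /glueB; case: (@split n1.+1 n2.+1 x).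
Qed.
Lemma contract_pre (V : finType) (E : rel V) (A HX : {set V}) (HE : rel V) c
    (f : V -> V) :
  (forall z, f z = if z \in HX then c else z) ->
  symmetric E -> HX \subset A -> c \in A ->
  (forall u v, u \in HX -> v \in HX -> HE u v -> E u v) ->
  (forall u v, u \in HX -> v \in HX ->
     connect [rel a b | [&& HE a b, a \in HX & b \in HX]] u v) ->
  (exists2 h, h \in HX & (c == h) || E c h) ->
  forall x y, x \in A -> y \in A -> f x = f y ->
  connect [rel a b | [&& E a b, a \in A, b \in A, f a == f x & f b == f x]] x y.
Proof.
move=> Hf sE HXA cA HEE Hcon [h hH hc] x y xA yA fxy.
set R := [rel a b | _].
have sR : symmetric R.
  move=> a b; apply/idP/idP => /and5P[e1 e2 e3 e4 e5]; apply/and5P; split => //;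
  by rewrite sE.
have [/eqP fxc | fxc] := boolP (f x == c).
  have Pc z : z \in A -> f z = c -> connect R z h.
    move=> zA fzc; have [zH|zH] := boolP (z \in HX).
      apply: connect_sub (Hcon z h zH hH) => a b /and3P[hab aH bH].
      by apply: connect1; rewrite /= fxc HEE // !(subsetP HXA) // !Hf aH bH eqxx.
    move: fzc; rewrite Hf (negbTE zH) => zc; subst z.
    have ch : (c == h) = false by apply: contraNF zH => /eqP ->.
    rewrite ch /= in hc.
    by apply: connect1; rewrite /= fxc hc zA (subsetP HXA) // !Hf hH (negbTE zH) eqxx.
  apply: connect_trans (Pc x xA fxc) _; rewrite (sym_connect_sym sR).
  exact: (Pc y yA (etrans (esym fxy) fxc)).
have xH : x \notin HX by apply: contra fxc => xH; rewrite Hf xH.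
have yH : y \notin HX.
  by apply: contra fxc => yH; rewrite fxy Hf yH.
move: fxy; rewrite !Hf (negbTE xH) (negbTE yH) => ->; exact: connect0.
Qed.
Lemma inN (V : finType) (E : rel V) (HX : {set V}) v :
  v \in nbh [set: V] E HX = (v \notin HX) && [exists u in HX, E u v].
Proof. by rewrite /nbh inE in_setT. Qed.

Lemma inN' (V : finType) (E : rel V) (HX : {set V}) v :
  v \in nbh [set: V] E HX -> v \notin HX /\ exists2 h, h \in HX & E h v.
Proof.
rewrite inN => /andP[vH /existsP[h /andP[hH ehv]]]; split=> //; by exists h.
Qed.

Lemma add_clique_sym (V : finType) (E : rel V) (N : {set V}) :
  symmetric E -> symmetric (add_clique E N).
Proof.
move=> sE u v; rewrite /add_clique /= sE [v == u]eq_sym.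
by case: (u \in N); case: (v \in N); rewrite /= ?andbT ?andbF.
Qed.

Lemma nbh_le2 (V : finType) (E : rel V) (HX : {set V}) (HE : rel V) :
  symmetric E -> connected_subgraph [set: V] E HX HE ->
  tw_le (HX :|: nbh [set: V] E HX) (add_clique E (nbh [set: V] E HX)) 2 ->
  #|nbh [set: V] E HX| <= 2.
Proof.
set N := nbh _ _ _.
move=> sE [_ HX0 HEE sHE Hcon] tw.
rewrite leqNgt; apply/negP => /card_gt2P [a [b [c [[aN bN cN] [ab bc ca]]]]].
have [h0 h0H] := set0Pn _ HX0.
pose f := fun x => if x \in HX then h0 else x.
pose A' := [set h0; a; b; c].
have NA w : w \in N -> w \in HX :|: N by move=> wN; rewrite inE wN orbT.
have HA w : w \in HX -> w \in HX :|: N by move=> wH; rewrite inE wH.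
have fN w : w \in N -> f w = w by move=> /inN' [wH _]; rewrite /f (negbTE wH).
have fH w : w \in HX -> f w = h0 by move=> wH; rewrite /f wH.
have A'c v : v \in A' -> v = h0 \/ v \in N.
  move=> vA; have : [|| v == h0, v == a, v == b | v == c] by move: vA; rewrite !inE -!orbA.
  by case/or4P => /eqP->; [left|right..].
have tw' := @tw_map V _ A' _ [rel u v | u != v] 2 f tw.
have [] := tw'.
- move=> v /A'c [->|vN]; first by exists h0; [exact: HA | exact: fH].
  by exists v; [exact: NA | exact: fN].
- move=> u v /A'c [->|uN] /A'c [->|vN] /=; first by rewrite eqxx.
  + move=> _; have [_ [h hH ehv]] := inN' vN.
    by exists h, v; split; [exact: HA | exact: NA | exact: fH | exact: fN | rewrite /add_clique /= ehv].
  + move=> _; have [_ [h hH ehu]] := inN' uN.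
    by exists u, h; split; [exact: NA | exact: HA | exact: fN | exact: fH | rewrite /add_clique /= sE ehu].
  + move=> uv; exists u, v; split; [exact: NA | exact: NA | exact: fN | exact: fN |].
    by rewrite /add_clique /= uv uN vN orbT.
- move=> x y xA yA fxy _.
  apply: (@contract_pre V _ _ HX HE h0 f) => //.
  + exact: add_clique_sym.
  + by apply/subsetP => w; exact: HA.
  + exact: HA.
  + by move=> u v uH vH huv; rewrite /add_clique /= HEE.
  + by exists h0; rewrite ?eqxx.
move=> n [T [B [tT [BA Bcov Bedge Bconn Bsz]]]].
have [i sub] : exists i, A' \subset B i.
  apply: (clique_bag tT) => [v i j _|u v uA vA]; first exact: Bconn.
  have [<-|uv] := eqVneq u v.
    by have [i ui] := Bcov u uA; exists i; rewrite ui.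
  by apply: Bedge.
have := leq_trans (subset_leq_card sub) (Bsz i).
have h0N w : w \in N -> (h0 == w) = false.
  by move=> /inN' [wH _]; apply: contraNF wH => /eqP <-.
have : 3 < #|A'|.
  apply/card_geqP; exists [:: h0; a; b; c]; split => //.
    rewrite /= !inE (h0N a aN) (h0N b bN) (h0N c cN) (negbTE ab) (negbTE bc).
    by rewrite [a == c]eq_sym (negbTE ca).
  by move=> z; rewrite /A' !inE -!orbA.
lia.
Qed.
Theorem mainTheorem3 (V : finType) (E : rel V) (t : nat)
    (HX : {set V}) (HE : rel V) :
  symmetric E -> irreflexive E ->
  connected_subgraph [set: V] E HX HE ->
  tw_le (HX :|: nbh [set: V] E HX) (add_clique E (nbh [set: V] E HX)) 2 ->
  (solution [set: V] E t <->
   solution (~: HX) (add_clique E (nbh [set: V] E HX)) t).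
Proof.
move=> sE iE Hsub tw.
have N2 := nbh_le2 sE Hsub tw.
have inNP w : w \in nbh [set: V] E HX -> w \notin HX /\ exists2 h, h \in HX & E h w.
  exact: inN'.
have inNR w h : w \notin HX -> h \in HX -> E h w -> w \in nbh [set: V] E HX.
  by move=> wH hH ehw; rewrite inN wH /=; apply/existsP; exists h; rewrite hH.
move: tw N2 inNP inNR; set N := nbh _ _ _; clearbody N => tw N2 inNP inNR.
have [_ HX0 HEE sHE Hcon] := Hsub.
have N3 u v w : u \in N -> v \in N -> w \in N -> u != v -> v != w -> w != u -> False.
  move=> uN vN wN uv vw wu; have : 2 < #|N| by apply/card_gt2P; exists u, v, w.
  by rewrite ltnNge N2.
have NnH w : w \in N -> w \notin HX by move=> /inNP [].
split.
- move=> [S [_ St twS]].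
  have [le1|gt1] := leqP #|N :\: S| 1.
  + exists (S :\: HX); split.
    * by apply/subsetP => x; rewrite !inE => /andP[].
    * exact: leq_trans (subset_leq_card (subsetDl S HX)) St.
    apply: (@tw_map V _ _ E _ 2 id twS).
    * move=> v vA; exists v => //; move: vA; rewrite !inE.
      by case: (v \in S); case: (v \in HX).
    * move=> u v uA vA; rewrite /add_clique /= => /orP[euv|/and3P[uv uN vN]].
        exists u, v; split => //; [move: uA|move: vA]; rewrite !inE;
        by case: (_ \in S); case: (_ \in HX).
      exfalso; move: le1; rewrite leqNgt => /negP; apply; apply/card_gt1P.
      exists u, v; split => //; rewrite inE ?uN ?vN andbT; [move: uA|move: vA];
        rewrite !inE; by case: (_ \in S); case: (_ \in HX).
    * move=> x y _ _ -> _; exact: connect0.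
  have /card_gt1P [u [v [uNS vNS uv]]] := gt1.
  have uN : u \in N by move: uNS; rewrite inE => /andP[].
  have NS w : w \in N -> w \notin S.
    move=> wN; apply/negP => wS; move: uNS vNS; rewrite !inE => /andP[uS uN'] /andP[vS vN].
    have uw : u != w by apply: contraNneq uS => ->.
    have vw : v != w by apply: contraNneq vS => ->.
    have : 2 < #|N| by apply/card_gt2P; exists u, v, w; split; split => //; rewrite eq_sym.
    by rewrite ltnNge N2.
  have [/set0Pn [h hSH] | SH0] := boolP (S :&: HX != set0).
  + exists ((S :\: HX) :|: [set u]); split.
    * apply/subsetP => x; rewrite !inE => /orP[/andP[]//|/eqP ->]; exact: NnH.
    * have hS : 0 < #|S :&: HX| by apply/card_gt0P; exists h.
      have := cardsID HX S; have := cardsU (S :\: HX) [set u]; rewrite cards1.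
      lia.
    have Amem z : z \in ~: HX :\: ((S :\: HX) :|: [set u]) -> z \in [set: V] :\: S.
      rewrite !inE.
      move=> /andP[H1 H2]; rewrite andbT; apply: contra H1 => H3; by rewrite H2 H3.
    apply: (@tw_map V _ _ E _ 2 id twS).
    * by move=> v' vA; exists v' => //; exact: Amem.
    * move=> x y xA yA; rewrite /add_clique /= => /orP[exy|/and3P[xy xN yN]].
        by exists x, y; split => //; exact: Amem.
      have xu : x != u by apply: contraTneq xA => ->; rewrite !inE eqxx !orbT.
      have yu : y != u by apply: contraTneq yA => ->; rewrite !inE eqxx !orbT.
      by exfalso; apply: (N3 x y u) => //; rewrite eq_sym.
    * move=> x y _ _ -> _; exact: connect0.
  + move: SH0; rewrite negbK => /eqP SH0.
    have HnS w : w \in HX -> w \notin S.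
      move=> wH; apply/negP => wS.
      have : w \in S :&: HX by rewrite inE wS wH.
      by rewrite SH0 inE.
    exists S; split.
    * apply/subsetP => x xS; rewrite inE; apply/negP => xH.
      by move: (HnS x xH); rewrite xS.
    * exact: St.
    pose f := fun x => if x \in HX then u else x.
    have fH w : w \in HX -> f w = u by move=> wH; rewrite /f wH.
    have fN w : w \notin HX -> f w = w by move=> wH; rewrite /f (negbTE wH).
    apply: (@tw_map V _ _ E _ 2 f twS).
    * move=> v' vA; exists v'.
        by move: vA; rewrite !inE; case: (v' \in S).
      by apply: fN; move: vA; rewrite !inE => /andP[_ ->].
    * move=> x y xA yA.
      have xS : x \notin S by move: xA; rewrite !inE => /andP[].
      have xH : x \notin HX by move: xA; rewrite !inE => /andP[_ ->].
      have yS : y \notin S by move: yA; rewrite !inE => /andP[].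
      have yH : y \notin HX by move: yA; rewrite !inE => /andP[_ ->].
      rewrite /add_clique /= => /orP[exy|/and3P[xy xN yN]].
        by exists x, y; split; rewrite ?inE ?xS ?yS ?fN.
      have [/eqP xu|xu] := boolP (x == u).
        subst x; have [_ [h hH ehy]] := inNP y yN.
        exists h, y; split; [by rewrite !inE HnS | by rewrite !inE yS | exact: fH | exact: fN | exact: ehy].
      have [/eqP yu|yu] := boolP (y == u).
        subst y; have [_ [h hH ehx]] := inNP x xN.
        exists x, h; split; [by rewrite !inE xS | by rewrite !inE HnS | exact: fN | exact: fH | by rewrite sE].
      by exfalso; apply: (N3 x y u) => //; rewrite eq_sym.
    * move=> x y xA yA fxy _.
      apply: (@contract_pre V _ _ HX HE u f) => //.
      + by apply/subsetP => w wH; rewrite !inE HnS.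
      + by rewrite !inE NS.
      + have [_ [h hH ehu]] := inNP u uN; exists h => //; by rewrite sE ehu orbT.
- move=> [S [SH St twS]]; exists S; split; [exact: subsetT | exact: St |].
  have [n1 [T1 [B1 D1]]] := twS.
  have [n2 [T2 [B2 D2]]] : tw_le ((HX :|: N) :\: S) (add_clique E N) 2.
    apply: (@tw_map V _ _ _ _ 2 id tw).
    * by move=> v vA; exists v => //; move: vA; rewrite inE => /andP[].
    * move=> x y xA yA exy; exists x, y; split => //.
        by move: xA; rewrite inE => /andP[].
      by move: yA; rewrite inE => /andP[].
    * move=> x y _ _ -> _; exact: connect0.
  have bag (A : {set V}) n (T : rel 'I_n.+1) B :
      N :\: S \subset A ->
      tree_decomposition_width_le A (add_clique E N) 2 T B ->
      exists i, N :\: S \subset B i.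
    move=> CA [tT [BA Bcov Bedge Bconn Bsz]].
    apply: (clique_bag tT) => [v i j _|u v uC vC]; first exact: Bconn.
    have uA := subsetP CA u uC; have vA := subsetP CA v vC.
    have [<-|uv] := eqVneq u v.
      by have [i ui] := Bcov u uA; exists i; rewrite ui.
    apply: Bedge => //; rewrite /add_clique /= uv.
    by move: uC vC; rewrite !inE => /andP[_ ->] /andP[_ ->]; rewrite orbT.
  have C1 : N :\: S \subset ~: HX :\: S.
    by apply/subsetP => x; rewrite !inE => /andP[xS xN]; rewrite xS NnH.
  have C2 : N :\: S \subset (HX :|: N) :\: S.
    by apply/subsetP => x; rewrite !inE => /andP[xS xN]; rewrite xS xN orbT.
  have [i1 sub1] := bag _ _ _ _ C1 D1.
  have [i2 sub2] := bag _ _ _ _ C2 D2.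
  have AU : (~: HX :\: S) :|: ((HX :|: N) :\: S) = [set: V] :\: S.
    apply/setP => x; rewrite !inE; by case: (x \in HX); case: (x \in S).
  have I12 : (~: HX :\: S) :&: ((HX :|: N) :\: S) \subset N :\: S.
    apply/subsetP => x; rewrite !inE.
    by case: (x \in S); case: (x \in HX); case: (x \in N).
  rewrite -AU; apply: (tw_glue D1 D2 (i1 := i1) (i2 := i2)).
  + exact: subset_trans I12 sub1.
  + exact: subset_trans I12 sub2.
  + rewrite AU => x y; rewrite !inE !andbT => xS yS exy.
    rewrite /add_clique /= exy xS yS /= !andbT.
    have [xH|xH] := boolP (x \in HX).
      have [yH|yH] := boolP (y \in HX); first by rewrite /= ?orbT.
      by rewrite (inNR y x yH xH exy) /= ?orbT.
    have [yH|yH] := boolP (y \in HX); last by [].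
    by rewrite (inNR x y xH yH) /= ?orbT // sE.
Qed.
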